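(* Let $m,d,\ell\ge1$, $n\ge2$ a power of two, $N\ge2$, $t>0$, and let $f\colon[N]^m\to\{0,1\}^{\ell\log n+(\ell+1)n}$ be $d$-local. Let $S\subseteq[m]$ be the set of input coordinates that either affect more than $t$ output bits of $f$ or affect at least one of the first $\ell\log n$ output bits. Then the fraction of shift vectors $i\in(\{0,1\}^{\log n})^\ell$ that are bad (with respect to $f$, $S$) is at most $4d\big(\frac{t}{\ell n}\big)^{\ell}$.
   Context: A function is $d$-local if each output bit depends on at most $d$ input coordinates; an input coordinate ''affects'' an output bit if that bit depends on it. The $\ell\log n+(\ell+1)n$ output bits of $f$ are named, in order, $\mathbf{i}^{(1)},\dots,\mathbf{i}^{(\ell)}$ (each a block of $\log n$ bits), then $\mathbf{x}=(\mathbf{x}_1,\dots,\mathbf{x}_n)$, then $\mathbf{y}^{(1)},\dots,\mathbf{y}^{(\ell)}$ (each in $\{0,1\}^n$). Elements $i^{(j)}\in\{0,1\}^{\log n}$ are identified with elements of $\mathbb{Z}_n$, and indices of $\mathbf{x},\mathbf{y}^{(j)}$ are taken modulo $n$. For a shift vector $i=(i^{(1)},\dots,i^{(\ell)})\in(\{0,1\}^{\log n})^\ell$ and $u\in[n]$, the equality block $B_u(i)$ is the set of $\ell+1$ output positions $(\mathbf{x}_u,\mathbf{y}^{(1)}_{u-i^{(1)}},\dots,\mathbf{y}^{(\ell)}_{u-i^{(\ell)}})$. A block is covered if some input coordinate $c\notin S$ affects every output bit in the block. A shift vector $i$ is bad if at least $n/4$ of the blocks $B_u(i)$, $u\in[n]$,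 are covered. *)

(* Defs.v *)
From mathcomp Require Import all_boot all_order all_algebra.
Set Implicit Arguments. Unset Strict Implicit. Unset Printing Implicit Defensive.

Definition affects (m N L : nat) (f : {ffun 'I_m -> 'I_N} -> 'I_L -> bool)
  (c : 'I_m) (j : 'I_L) : bool :=
  [exists x : {ffun 'I_m -> 'I_N}, exists y : {ffun 'I_m -> 'I_N},
     [forall c' : 'I_m, (c' != c) ==> (x c' == y c')] && (f x j != f y j)].

Definition affects_pos (m N L : nat) (f : {ffun 'I_m -> 'I_N} -> 'I_L -> bool)
  (c : 'I_m) (p : nat) : bool :=
  [exists j : 'I_L, (nat_of_ord j == p) && affects f c j].

Definition local (m N L d : nat) (f : {ffun 'I_m -> 'I_N} -> 'I_L -> bool) : Prop :=
  forall j : 'I_L, #|[set c : 'I_m | affects f c j]| <= d.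

(* Output length for parameters l (= ell), k (= log n), n. *)
Definition outlen (l k n : nat) : nat := l * k + (l.+1) * n.

(* 0-based positions: i-blocks occupy [0, l*k); x_u is at l*k + u;
   y^(j)_v (j = 0..l-1 standing for y^(1)..y^(l)) is at l*k + n + j*n + v. *)
Definition pos_x (l k n u : nat) : nat := l * k + u.
Definition pos_y (l k n j v : nat) : nat := l * k + n + j * n + v.

Definition Sset (R : realFieldType) (m N L lk : nat)
  (f : {ffun 'I_m -> 'I_N} -> 'I_L -> bool) (t : R) : {set 'I_m} :=
  [set c : 'I_m | (t < (#|[set j : 'I_L | affects f c j]|)%:R)%R
                  || [exists j : 'I_L, (j < lk) && affects f c j]].

(* Block B_u(i) is covered w.r.t. S. Shift values i^(j) are in Z_n = 'I_n;
   index u - i^(j) is taken mod n. *)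
Definition covered (m N l k n : nat)
  (f : {ffun 'I_m -> 'I_N} -> 'I_(outlen l k n) -> bool) (S : {set 'I_m})
  (i : {ffun 'I_l -> 'I_n}) (u : 'I_n) : bool :=
  [exists c : 'I_m, (c \notin S) && affects_pos f c (pos_x l k n u)
     && [forall j : 'I_l, affects_pos f c (pos_y l k n j ((u + n - i j) %% n))]].

Definition bad (R : realFieldType) (m N l k n : nat)
  (f : {ffun 'I_m -> 'I_N} -> 'I_(outlen l k n) -> bool) (S : {set 'I_m})
  (i : {ffun 'I_l -> 'I_n}) : bool :=
  ((n%:R / 4 : R) <= (#|[set u : 'I_n | covered f S i u]|)%:R)%R.

(* Main.v *)
Require Import Defs.
From mathcomp Require Import all_boot all_order all_algebra zify ring.
Import Order.TTheory GRing.Theory Num.Theory.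
Open Scope ring_scope.

Local Open Scope nat_scope.
Lemma card_forall (l n : nat) (P : 'I_l -> 'I_n -> bool) :
  #|[set i : {ffun 'I_l -> 'I_n} | [forall j, P j (i j)]]| =
  \prod_(j < l) #|[set v | P j v]|.
Proof.
rewrite (eq_card (B := (family (fun j => [pred v | P j v]) : simpl_pred {ffun 'I_l -> 'I_n}))).
  rewrite card_family foldrE big_image /=.
  by apply: eq_bigr => j _; apply: eq_card => v; rewrite inE.
move=> i; rewrite inE; apply/forallP/familyP => H j; by have := H j; rewrite ?inE.
Qed.

Lemma inj_count (T U : finType) (P : pred T) (Q : pred U) (g : T -> U) :
  {in P &, injective g} -> (forall x, x \in P -> g x \in Q) -> #|P| <= #|Q|.
Proof.
move=> inj PQ.
have inj' : {in [set x | P x] &, injective g}.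
  by move=> x y; rewrite !inE; apply: inj.
have := card_in_imset inj'.
rewrite cardsE.
move=> <-.
suff: #|g @: [set x | P x]| <= #|[set y in Q]| by rewrite cardsE.
apply: subset_leq_card; apply/subsetP => y /imsetP [x]; rewrite !inE => Px ->.
exact: PQ.
Qed.

Lemma modshift (n u v : nat) : u < n -> v < n ->
  (u + n - v) %% n = if v <= u then u - v else u + n - v.
Proof.
move=> hu hv; case: leqP => h.
  have -> : u + n - v = (u - v) + n by lia.
  by rewrite modnDr modn_small //; lia.
by rewrite modn_small //; lia.
Qed.

Lemma card_bigcup_le (I T : finType) (A : {pred I}) (F : I -> {set T}) :
  #|\bigcup_(c in A) F c| <= \sum_(c in A) #|F c|.
Proof.
elim/big_rec2: _ => [|c x U _ leUn]; first by rewrite cards0.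
by rewrite (leq_trans (leq_card_setU (F c) U).1) ?leq_add2l.
Qed.

Lemma card_sum (T : finType) (P : pred T) : #|[set x | P x]| = \sum_x P x.
Proof.
rewrite -sum1_card big_mkcond /=; apply: eq_bigr => y _; rewrite inE; by case: (P y).
Qed.

Lemma card_exchange (T U : finType) (P : T -> U -> bool) :
  \sum_x #|[set y | P x y]| = \sum_y #|[set x | P x y]|.
Proof.
under eq_bigr do rewrite card_sum.
rewrite exchange_big; apply: eq_bigr => y _; by rewrite card_sum.
Qed.

Lemma shift_count (n u : nat) (hu : u < n) (Q : nat -> bool) :
  #|[set v : 'I_n | Q ((u + n - v) %% n)]| <= #|[set w : 'I_n | Q w]|.
Proof.
have n0 : 0 < n by lia.
pose g (v : 'I_n) : 'I_n := Ordinal (ltn_pmod (u + n - v) n0).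
apply: (@inj_count _ _ _ _ g).
  move=> v w _ _ /(congr1 val) /=; rewrite !modshift //.
  move=> h; suff: (v : nat) = w by move/val_inj.
  move: h.
  have := ltn_ord v; have := ltn_ord w.
  case: (leqP v u); case: (leqP w u); move=> *; lia.
by move=> v; rewrite !inE.
Qed.

Lemma count_pos (m N l k n : nat)
  (f : {ffun 'I_m -> 'I_N} -> 'I_(outlen l k n) -> bool) (c : 'I_m) :
  \sum_(j < l) #|[set v : 'I_n | affects_pos f c (pos_y l k n j v)]|
    <= #|[set p | affects f c p]|.
Proof.
have -> : \sum_(j < l) #|[set v : 'I_n | affects_pos f c (pos_y l k n j v)]|
   = #|[set p : 'I_l * 'I_n | affects_pos f c (pos_y l k n p.1 p.2)]|.
  transitivity (\sum_(j < l) \sum_(v : 'I_n | affects_pos f c (pos_y l k n j v)) 1).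
    apply: eq_bigr => j _; rewrite -sum1_card; apply: eq_bigl => v; by rewrite inE.
  rewrite (pair_big_dep xpredT (fun (j : 'I_l) (v : 'I_n) => affects_pos f c (pos_y l k n j v))) /=.
  rewrite -sum1_card; apply: eq_bigl => p; by rewrite inE.
have pf : forall p : 'I_l * 'I_n, pos_y l k n p.1 p.2 < outlen l k n.
  move=> [j v] /=; rewrite /pos_y /outlen mulSn.
  have h1 : j.+1 * n <= l * n by rewrite leq_mul2r ltn_ord orbT.
  rewrite mulSn in h1; have := ltn_ord v; lia.
pose g p : 'I_(outlen l k n) := Ordinal (pf p).
apply: (@inj_count _ _ _ _ g).
  move=> [j v] [j' v'] _ _ /(congr1 val) /=; rewrite /pos_y => h.
  have h2 : j * n + v = j' * n + v' by lia.
  have n0 : 0 < n by have := ltn_ord v; lia.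
  have e1 : (j * n + v) %/ n = j by rewrite divnMDl // divn_small ?addn0.
  have e2 : (j' * n + v') %/ n = j' by rewrite divnMDl // divn_small ?addn0.
  have e3 : (j * n + v) %% n = v by rewrite modnMDl modn_small.
  have e4 : (j' * n + v') %% n = v' by rewrite modnMDl modn_small.
  have ej : (j : nat) = j' by rewrite -e1 h2 e2.
  have ev : (v : nat) = v' by rewrite -e3 h2 e4.
  by move/val_inj: ej => ->; move/val_inj: ev => ->.
move=> p; rewrite !inE => /existsP [j0 /andP [/eqP e A]].
by have -> : g p = j0 by apply: val_inj; rewrite /= -e.
Qed.

Local Open Scope ring_scope.
Lemma F_bound (R : realFieldType) (m N l k n : nat)
  (f : {ffun 'I_m -> 'I_N} -> 'I_(outlen l k n) -> bool) (c : 'I_m) (u : nat) (t : R) :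
  (0 < l)%N -> (u < n)%N -> ((#|[set p | affects f c p]|%:R : R) <= t)%R ->
  ((#|[set i : {ffun 'I_l -> 'I_n} | [forall j : 'I_l, affects_pos f c (pos_y l k n j ((u + n - i j) %% n))]]|%:R : R)
    <= (t / l%:R) ^+ l)%R.
Proof.
move=> l0 un ht.
rewrite (@card_forall l n (fun (j : 'I_l) (v : 'I_n) => affects_pos f c (pos_y l k n j ((u + n - v) %% n)))).
apply: (le_trans (y := ((\prod_(j < l) #|[set v : 'I_n | affects_pos f c (pos_y l k n j v)]|)%:R : R))).
  rewrite ler_nat; apply: leq_prod => j _. exact: (@shift_count n u un (fun w => affects_pos f c (pos_y l k n j w))).
rewrite natr_prod.
have H := leif_AGM (A := predT) (E := fun j : 'I_l => (#|[set v : 'I_n | affects_pos f c (pos_y l k n j v)]|%:R : R)).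
have H2 := (H (fun _ _ => ler0n _ _)).1.
have el : #|(predT : {pred 'I_l})| = l by rewrite -[RHS]card_ord; apply: eq_card.
rewrite el in H2.
apply: (le_trans H2); apply: lerXn2r.
- by rewrite nnegrE; apply: divr_ge0; [apply: sumr_ge0 => *; apply: ler0n | apply: ler0n].
- by rewrite nnegrE; apply: divr_ge0; [apply: le_trans ht; apply: ler0n | apply: ler0n].
apply: ler_wpM2r; first by rewrite invr_ge0 ler0n.
rewrite -natr_sum; apply: le_trans ht; rewrite ler_nat.
exact: count_pos.
Qed.

Theorem claim4 (R : realFieldType) (m d l k n N : nat) (t : R)
  (hm : (1 <= m)%N) (hd : (1 <= d)%N) (hl : (1 <= l)%N)
  (hn : n = (2 ^ k)%N) (hn2 : (2 <= n)%N) (hN : (2 <= N)%N) (ht : 0 < t)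
  (f : {ffun 'I_m -> 'I_N} -> 'I_(outlen l k n) -> bool)
  (hloc : local d f) :
  let S := Sset (l * k) f t in
  (#|[set i : {ffun 'I_l -> 'I_n} | bad R f S i]|)%:R / (n ^ l)%:R
    <= 4 * d%:R * (t / (l * n)%:R) ^+ l.
Proof.
cbv zeta.
set S := Sset (l * k) f t.
set K := (t / l%:R) ^+ l.
have Kge0 : 0 <= K by rewrite exprn_ge0 // divr_ge0 // ?ltW // ler0n.
have hS : forall c, c \notin S -> (#|[set p | affects f c p]|%:R : R) <= t.
  by move=> c; rewrite /S /Sset inE negb_or => /andP [h _]; rewrite leNgt.
have hU : forall u : 'I_n, (#|[set i | covered f S i u]|%:R : R) <= d%:R * K.
  move=> u.
  pose A := [set c | (c \notin S) && affects_pos f c (pos_x l k n u)].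
  pose F c := [set i : {ffun 'I_l -> 'I_n} | [forall j : 'I_l, affects_pos f c (pos_y l k n j ((u + n - i j) %% n))]].
  have sub : [set i | covered f S i u] \subset \bigcup_(c in A) F c.
    apply/subsetP => i; rewrite inE => /existsP [c /andP [/andP [cS cx] cy]].
    apply/bigcupP; exists c; first by rewrite inE cS cx.
    by rewrite inE.
  have hA : (#|A| <= d)%N.
    have px : (pos_x l k n u < outlen l k n)%N.
      by rewrite /pos_x /outlen mulSn; have := ltn_ord u; lia.
    apply: leq_trans (hloc (Ordinal px)).
    apply: subset_leq_card; apply/subsetP => c; rewrite !inE => /andP [_ /existsP [j0 /andP [/eqP e a]]].
    by have -> : Ordinal px = j0 by apply: val_inj; rewrite /= -e.
  apply: (le_trans (y := ((\sum_(c in A) #|F c|)%N)%:R)).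
    by rewrite ler_nat; apply: leq_trans (subset_leq_card sub) (card_bigcup_le _ _ _ _).
  rewrite natr_sum.
  apply: (le_trans (y := \sum_(c in A) K)).
    apply: ler_sum => c; rewrite inE => /andP [cS _].
    exact: (@F_bound R m N l k n f c u t hl (ltn_ord u) (hS c cS)).
  by rewrite sumr_const -[K *+ _]mulr_natl; apply: (ler_wpM2r Kge0); rewrite ler_nat.
have hsum : \sum_(i : {ffun 'I_l -> 'I_n}) (#|[set u | covered f S i u]|%:R : R)
    = \sum_(u : 'I_n) (#|[set i | covered f S i u]|%:R : R).
  by rewrite -!natr_sum card_exchange.
set B := #|[set i | bad R f S i]|.
have key : B%:R * (n%:R / 4) <= n%:R * (d%:R * K).
  apply: (le_trans (y := \sum_(i in [set i | bad R f S i]) (#|[set u | covered f S i u]|%:R : R))).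
    rewrite mulr_natl -sumr_const; apply: ler_sum => i; by rewrite inE.
  apply: (le_trans (y := \sum_(i : {ffun 'I_l -> 'I_n}) (#|[set u | covered f S i u]|%:R : R))).
    rewrite big_mkcond; apply: ler_sum => i _; case: ifP => _ //; exact: ler0n.
  rewrite hsum; apply: (le_trans (y := \sum_(u : 'I_n) d%:R * K)).
    by apply: ler_sum => u _; exact: hU.
  by rewrite sumr_const card_ord -[(d%:R * K) *+ n]mulr_natl.
have hB : B%:R <= 4 * d%:R * K.
  have n4 : 0 < n%:R / 4 :> R by rewrite divr_gt0 // ltr0n; lia.
  rewrite -(ler_pM2r n4).
  have -> : 4 * d%:R * K * (n%:R / 4) = n%:R * (d%:R * K).
    by field.
  exact: key.
have -> : 4 * d%:R * (t / (l * n)%:R) ^+ l = 4 * d%:R * K / (n ^ l)%:R.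
  by rewrite natrM natrX invfM mulrA exprMn exprVn /K !mulrA.
by apply: ler_wpM2r => //; rewrite invr_ge0 ler0n.
Qed.
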